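(* Let $a\in\mathbb{C}\setminus\{0\}$, let $\omega$ be a valid weight, and let $V_a=M_{a-z}^*M_{a-z}$ act on $H^2_\omega$. Then $\sigma_{\mathrm p}(V_a)\subset(0,\infty)$.
   Context: A weight $\omega=\{\omega_n\}_{n\ge0}$ is called valid if it is a monotonic sequence of positive numbers with $\omega_0=1$, $\lim_{n\to\infty}\omega_{n+1}/\omega_n=1$ and $\sum_{n=0}^\infty(1-\omega_{n+1}/\omega_n)^2<\infty$. The weighted Hardy space $H^2_\omega$ is the Hilbert space of holomorphic functions $f(z)=\sum_{n\ge0}a_nz^n$ on the unit disc with $\|f\|_\omega^2=\sum_{n\ge0}|a_n|^2\omega_n<\infty$. $M_{a-z}$ denotes multiplication by $a-z$ on $H^2_\omega$ and $M_{a-z}^*$ its adjoint. $\sigma_{\mathrm p}$ denotes the point spectrum. *)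

(* Defs.v *)
From Stdlib Require Import Reals Lra.
From Coquelicot Require Import Coquelicot.
Open Scope R_scope.

Definition valid_weight (w : nat -> R) : Prop :=
  (forall n, 0 < w n) /\
  ((forall n, w (S n) <= w n) \/ (forall n, w n <= w (S n))) /\
  w 0%nat = 1 /\
  is_lim_seq (fun n => w (S n) / w n) 1 /\
  ex_series (fun n => (1 - w (S n) / w n) ^ 2).

(** Elements of H^2_w are represented by their Taylor coefficient
    sequences f(z) = sum_n f_n z^n. *)
Definition inH2 (w : nat -> R) (f : nat -> C) : Prop :=
  ex_series (fun n => (Cmod (f n)) ^ 2 * w n).

Definition inner_w (w : nat -> R) (f g : nat -> C) : C :=
  (Series (fun n => Re (f n * Cconj (g n) * RtoC (w n))%C),
   Series (fun n => Im (f n * Cconj (g n) * RtoC (w n))%C)).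

Definition mult_a_minus_z (a : C) (f : nat -> C) : nat -> C :=
  fun n => match n with
           | O => (a * f O)%C
           | S k => (a * f (S k) - f k)%C
           end.

Definition is_adjoint (w : nat -> R) (M T : (nat -> C) -> (nat -> C)) : Prop :=
  (forall g, inH2 w g -> inH2 w (T g)) /\
  (forall f g, inH2 w f -> inH2 w g ->
     inner_w w (M f) g = inner_w w f (T g)).

Definition in_point_spectrum (w : nat -> R) (V : (nat -> C) -> (nat -> C))
  (lam : C) : Prop :=
  exists f, inH2 w f /\ (exists n, f n <> 0%C) /\
            (forall n, V f n = (lam * f n)%C).

(* Main.v *)
Require Import Defs.
From Stdlib Require Import Reals Lra Lia.
From Coquelicot Require Import Coquelicot.
From Stdlib Require Import FunctionalExtensionality.
Open Scope R_scope.

Lemma Series_zero : Series (fun _ => 0) = 0.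
Proof.
  rewrite (Series_ext (fun _ => 0) (fun n => 0 * 0)); [|intros; ring].
  rewrite Series_scal_l; ring.
Qed.

Lemma Series_pos (u : nat -> R) (k : nat) :
  (forall n, 0 <= u n) -> 0 < u k -> ex_series u -> 0 < Series u.
Proof.
  intros H0 Hk He.
  rewrite (Series_incr_n u (S k)); [|lia|exact He].
  simpl pred.
  assert (0 <= Series (fun j => u (S k + j)%nat)).
  { rewrite <- Series_zero. apply Series_le.
    - intros; split; [lra| apply H0].
    - now apply ex_series_incr_n. }
  assert (u k <= sum_f_R0 u k).
  { destruct k. simpl; lra.
    simpl. pose proof (cond_pos_sum u k H0). lra. }
  lra.
Qed.

Lemma ratio_bound (w : nat -> R) :
  is_lim_seq (fun n => w (S n) / w n) 1 ->
  exists K, 0 < K /\ forall n, w (S n) / w n <= K.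
Proof.
  intros H. apply is_lim_seq_spec in H.
  destruct (H (mkposreal 1 Rlt_0_1)) as [N HN]. simpl in HN.
  assert (Hb : forall M, exists K, 0 < K /\ forall n, (n < M)%nat -> w (S n) / w n <= K).
  { induction M.
    - exists 1; split; [lra| intros; lia].
    - destruct IHM as [K [HK HK']].
      exists (Rmax K (Rabs (w (S M) / w M))); split.
      + eapply Rlt_le_trans; [exact HK| apply Rmax_l].
      + intros n Hn. destruct (Nat.eq_dec n M).
        * subst. eapply Rle_trans; [apply Rle_abs| apply Rmax_r].
        * eapply Rle_trans; [apply HK'; lia| apply Rmax_l]. }
  destruct (Hb N) as [K [HK HK']].
  exists (Rmax K 2); split.
  - eapply Rlt_le_trans; [exact HK| apply Rmax_l].
  - intros n. destruct (Compare_dec.le_lt_dec N n).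
    + specialize (HN n l). apply Rabs_lt_between' in HN.
      eapply Rle_trans; [|apply Rmax_r]. lra.
    + eapply Rle_trans; [apply HK'; exact l| apply Rmax_l].
Qed.

Lemma Cmod_sq_ge0 (z : C) : 0 <= Cmod z ^ 2.
Proof. pose proof (Cmod_ge_0 z). nra. Qed.

Lemma mult_inH2 (a : C) (w : nat -> R) (f : nat -> C) :
  valid_weight w -> inH2 w f -> inH2 w (mult_a_minus_z a f).
Proof.
  intros [Hpos [_ [_ [Hlim _]]]] Hf.
  destruct (ratio_bound w Hlim) as [K [HK HK']].
  unfold inH2 in *.
  set (g := fun n => match n with O => 0 | S k => Cmod (f k) ^ 2 * w k end).
  assert (Hg : ex_series g).
  { apply ex_series_incr_1. exact Hf. }
  apply (ex_series_le (K:=R_AbsRing) (V:=R_CompleteNormedModule) _ (fun n => 2 * Cmod a ^ 2 * (Cmod (f n) ^ 2 * w n) + 2 * K * g n)).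
  - intros n. change norm with (@abs R_AbsRing). simpl. unfold abs; simpl.
    pose proof (Hpos n) as Hwn.
    rewrite Rabs_pos_eq; [| apply Rmult_le_pos; [apply Cmod_sq_ge0| lra]].
    destruct n as [|k]; simpl mult_a_minus_z; unfold g.
    + rewrite Cmod_mult. pose proof (Cmod_ge_0 a); pose proof (Cmod_ge_0 (f 0%nat)).
      assert (0 <= (Cmod a * Cmod (f 0%nat))^2 * w 0%nat) by (apply Rmult_le_pos; nra).
      nra.
    + assert (Hk : w (S k) <= K * w k).
      { specialize (HK' k). pose proof (Hpos k).
        unfold Rdiv in HK'. apply (Rmult_le_compat_r (w k)) in HK'; [|lra].
        rewrite Rmult_assoc, Rinv_l in HK'; lra. }
      assert (Ht : Cmod (a * f (S k) - f k) <= Cmod a * Cmod (f (S k)) + Cmod (f k)).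
      { unfold Cminus. eapply Rle_trans; [apply Cmod_triangle|].
        rewrite Cmod_opp, Cmod_mult. lra. }
      pose proof (Cmod_ge_0 (a * f (S k) - f k)).
      pose proof (Cmod_ge_0 a); pose proof (Cmod_ge_0 (f (S k))); pose proof (Cmod_ge_0 (f k)).
      set (X := Cmod (a * f (S k) - f k)) in *.
      set (A := Cmod a) in *. set (B := Cmod (f (S k))) in *. set (D := Cmod (f k)) in *.
      assert (X ^ 2 <= 2 * A ^ 2 * B ^ 2 + 2 * D ^ 2).
      { assert (X^2 <= (A*B + D)^2) by (apply pow_incr; lra). pose proof (pow2_ge_0 (A*B - D)). nra. }
      assert (X ^ 2 * w (S k) <= (2 * A ^ 2 * B ^ 2 + 2 * D ^ 2) * w (S k))
        by (apply Rmult_le_compat_r; lra).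
      assert (0 <= D^2) by nra.
      assert (2 * D^2 * w (S k) <= 2 * D^2 * (K * w k)) by (apply Rmult_le_compat_l; nra).
      nra.
  - assert (HH : ex_series (fun n => plus (scal (2 * Cmod a ^ 2) (Cmod (f n) ^ 2 * w n))
                                        (scal (2 * K) (g n)))).
    { apply (ex_series_plus (K:=R_AbsRing) (V:=R_NormedModule)); apply (ex_series_scal_l (K:=R_AbsRing) (V:=R_NormedModule)); assumption. }
    exact HH.
Qed.

Definition Nw (w : nat -> R) (f : nat -> C) := Series (fun n => Cmod (f n) ^ 2 * w n).

Lemma inner_self (w : nat -> R) (g : nat -> C) : inner_w w g g = RtoC (Nw w g).
Proof.
  unfold inner_w, Nw, RtoC. f_equal.
  - apply Series_ext. intros n. destruct (g n) as [x y]. unfold Cmod.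
    rewrite pow2_sqrt; [simpl; ring| nra].
  - transitivity (Series (fun _ => 0)); [|apply Series_zero]. apply Series_ext. intros n. destruct (g n) as [x y]. simpl. ring.
Qed.

Lemma inner_scal (w : nat -> R) (f : nat -> C) (lam : C) :
  inner_w w f (fun n => lam * f n)%C = (Re lam * Nw w f, - Im lam * Nw w f).
Proof.
  unfold inner_w, Nw. f_equal.
  - rewrite <- Series_scal_l. apply Series_ext. intros n.
    destruct (f n) as [x y]; destruct lam as [p q]. unfold Cmod.
    rewrite pow2_sqrt; [simpl; ring| nra].
  - rewrite <- Series_scal_l. apply Series_ext. intros n.
    destruct (f n) as [x y]; destruct lam as [p q]. unfold Cmod.
    rewrite pow2_sqrt; [simpl; ring| nra].
Qed.

Lemma Nw_pos (w : nat -> R) (f : nat -> C) :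
  (forall n, 0 < w n) -> inH2 w f -> (exists n, f n <> 0%C) -> 0 < Nw w f.
Proof.
  intros Hw Hf [k Hk]. apply (Series_pos _ k).
  - intros n. apply Rmult_le_pos; [apply Cmod_sq_ge0| left; apply Hw].
  - apply Rmult_lt_0_compat; [|apply Hw].
    assert (Cmod (f k) <> 0) by (intro E; apply Hk, Cmod_eq_0, E).
    pose proof (Cmod_ge_0 (f k)). nra.
  - exact Hf.
Qed.

Lemma mult_inj (a : C) (f : nat -> C) :
  a <> 0%C -> (forall n, mult_a_minus_z a f n = 0%C) -> forall n, f n = 0%C.
Proof.
  intros Ha H.
  assert (Hm : forall x, (a * x = 0)%C -> x = 0%C).
  { intros x E. apply Cmod_eq_0. assert (E' := f_equal Cmod E).
    rewrite Cmod_mult, Cmod_0 in E'.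
    assert (Cmod a <> 0) by (intro E2; apply Ha, Cmod_eq_0, E2).
    apply Rmult_integral in E'. tauto. }
  induction n.
  - apply Hm. exact (H 0%nat).
  - apply Hm. specialize (H (S n)). simpl in H. rewrite IHn in H.
    rewrite <- H. ring.
Qed.

Theorem corollary4p2 (a : C) (w : nat -> R)
  (Madj : (nat -> C) -> (nat -> C)) :
  a <> 0%C ->
  valid_weight w ->
  is_adjoint w (mult_a_minus_z a) Madj ->
  forall lam : C,
    in_point_spectrum w (fun f => Madj (mult_a_minus_z a f)) lam ->
    Im lam = 0 /\ 0 < Re lam.
Proof.
  intros Ha Hw [_ Hadj] lam [f [Hf [Hnz Heig]]].
  pose proof Hw as [Hpos _].
  assert (HM : inH2 w (mult_a_minus_z a f)) by (apply mult_inH2; assumption).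
  pose proof (Hadj f (mult_a_minus_z a f) Hf HM) as E.
  rewrite inner_self in E.
  assert (Madj (mult_a_minus_z a f) = fun n => (lam * f n)%C)
    by (apply functional_extensionality; exact Heig).
  rewrite H, inner_scal in E.
  assert (HNf := Nw_pos w f Hpos Hf Hnz).
  assert (HNM : 0 < Nw w (mult_a_minus_z a f)).
  { apply Nw_pos; auto.
    destruct (Classical_Prop.classic (exists n, mult_a_minus_z a f n <> 0%C)) as [?|Hn]; auto.
    exfalso. destruct Hnz as [k Hk]. apply Hk.
    apply (mult_inj a f Ha). intros n.
    destruct (Classical_Prop.classic (mult_a_minus_z a f n = 0%C)); auto.
    exfalso; apply Hn; eauto. }
  unfold RtoC in E. injection E as E1 E2.
  split.
  - assert (Im lam * Nw w f = 0) by lra.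
    apply Rmult_integral in H0. destruct H0; lra.
  - nra.
Qed.
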